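(* Let $T$ be a tree that is not isomorphic to the path $P_2$. Then the following statements are equivalent: (i) $\gamma_M(T)=\ell(T)$; (ii) $\gamma(T)=|\mathcal S(T)|$; (iii) for every vertex $u\in V(T)$ there is a leaf of $T$ at distance at most $2$ from $u$.
   Context: All graphs are finite, simple, undirected and connected; $d(u,v)$ is the shortest-path distance. A set $S\subseteq V(G)$ is a resolving set if for all distinct $x,y\in V(G)$ there is $u\in S$ with $d(u,x)\neq d(u,y)$. A set $S$ is dominating if every vertex not in $S$ has a neighbor in $S$; $\gamma(G)$ is the minimum size of a dominating set. A metric-locating-dominating set (MLD-set) is a set that is both resolving and dominating; $\gamma_M(G)$ is the minimum size of an MLD-set. In a tree $T$, a leaf is a vertex of degree 1, $\ell(T)$ is the number of leaves, a support vertex is a vertex adjacent to some leaf, and $\mathcal S(T)$ is the set of support vertices. *)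

(* Defs.v *)
From mathcomp Require Import all_boot.
Set Implicit Arguments. Unset Strict Implicit. Unset Printing Implicit Defensive.

Section Graphs.
Variable T : finType.
Variable e : rel T.

Definition simple_graph := symmetric e /\ irreflexive e.
Definition connected_graph := forall x y : T, connect e x y.
Definition acyclic := ~ exists c : seq T, [&& 2 < size c, uniq c & cycle e c].
Definition is_tree := [/\ 0 < #|T|, simple_graph, connected_graph & acyclic].

Definition walk_of_len (u v : T) (k : nat) : bool :=
  [exists t : k.-tuple T, path e u t && (last u t == v)].

(* shortest-path distance: least k with a walk (hence a path) of length k;
   shortest paths have length < #|T| in a connected graph *)
Definition dist (u v : T) : nat := find (walk_of_len u v) (iota 0 #|T|).

Definition resolving (S : {set T}) : bool :=
  [forall x, forall y, (x != y) ==> [exists u in S, dist u x != dist u y]].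
Definition dominating (S : {set T}) : bool :=
  [forall v, (v \notin S) ==> [exists u in S, e u v]].

Definition gamma : nat := #|[arg min_(S < [set: T] | dominating S) #|S|]|.
Definition gammaM : nat :=
  #|[arg min_(S < [set: T] | resolving S && dominating S) #|S|]|.

Definition leaf (x : T) : bool := #|[set y | e x y]| == 1.
Definition nleaves : nat := #|[set x | leaf x]|.
Definition support_set : {set T} := [set x | [exists y, leaf y && e x y]].

Definition iso_P2 : Prop :=
  exists f : T -> 'I_2, bijective f /\ forall x y, e x y = (f x != f y).
End Graphs.

(* Main.v *)
Require Import Defs.
From mathcomp Require Import all_boot.
Set Implicit Arguments. Unset Strict Implicit. Unset Printing Implicit Defensive.

Lemma walkP (T : finType) (e : rel T) u v k :
  reflect (exists s : seq T, [/\ size s = k, path e u s & last u s = v])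
          (walk_of_len e u v k).
Proof.
apply: (iffP existsP) => [[t /andP[Hp /eqP Hl]]|[s [Hs Hp Hl]]].
  by exists (val t); rewrite size_tuple.
have Hs' : size s == k by rewrite Hs.
by exists (Tuple Hs'); rewrite /= Hp Hl eqxx.
Qed.

Lemma walk0 (T : finType) (e : rel T) u v : walk_of_len e u v 0 = (u == v).
Proof.
apply/walkP/eqP => [[s [Hs _ <-]]|<-]; last by exists [::].
by case: s Hs.
Qed.

Lemma walk1 (T : finType) (e : rel T) u v : walk_of_len e u v 1 = e u v.
Proof.
apply/walkP/idP => [[s [Hs Hp <-]]|H]; last by exists [:: v]; rewrite /= H.
by case: s Hs Hp => [|a [|]]//= _ /andP[].
Qed.

Lemma walk2 (T : finType) (e : rel T) u v :
  walk_of_len e u v 2 = [exists t, e u t && e t v].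
Proof.
apply/walkP/existsP => [[s [Hs Hp <-]]|[t /andP[H1 H2]]].
  by case: s Hs Hp => [|a [|b [|]]]//= _ /and3P[H1 H2 _]; exists a; rewrite H1.
by exists [:: t; v]; rewrite /= H1 H2.
Qed.

Lemma dist_spec (T : finType) (e : rel T) u v : 2 < #|T| ->
  dist e u v = if u == v then 0 else if e u v then 1 else
     if [exists t, e u t && e t v] then 2 else
     (find (walk_of_len e u v) (iota 3 (#|T| - 3))).+3.
Proof.
move=> H3; rewrite /dist.
have -> : iota 0 #|T| = [:: 0, 1, 2 & iota 3 (#|T| - 3)].
  by rewrite -{1}(subnKC H3).
by rewrite /= walk0 walk1 walk2; do 3 case: ifP => //.
Qed.

Lemma leaf_nb (T : finType) (e : rel T) x : leaf e x -> exists y, e x y.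
Proof.
rewrite /leaf => /cards1P[y Hy]; exists y.
have : y \in [set y0 | e x y0] by rewrite Hy set11.
by rewrite inE.
Qed.

Lemma leaf_uniq (T : finType) (e : rel T) x y z :
  leaf e x -> e x y -> e x z -> y = z.
Proof.
rewrite /leaf => /cards1P[w Hw] Hy Hz.
have : y \in [set y0 | e x y0] by rewrite inE.
have : z \in [set y0 | e x y0] by rewrite inE.
by rewrite Hw !inE => /eqP-> /eqP->.
Qed.

Lemma nonleaf_nb (T : finType) (e : rel T) x u :
  ~~ leaf e x -> e x u -> exists2 z, e x z & z != u.
Proof.
move=> Hl Hu; apply/exists_inP; apply: contraNT Hl => /exists_inPn H.
rewrite /leaf; apply/cards1P; exists u; apply/setP => z.
rewrite !inE; apply/idP/eqP => [Hz|->//].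
by have := H z; rewrite negbK; move/(_ Hz)/eqP.
Qed.

Lemma twin_walk (T : finType) (e : rel T) a b s u k :
  symmetric e -> leaf e a -> e s a -> e s b -> u != a ->
  walk_of_len e u a k -> walk_of_len e u b k.
Proof.
move=> sym La Ha Hb Ua /walkP[p [Hs Hp Hl]]; apply/walkP.
case/lastP: p Hs Hp Hl => [_ _ /= Hl|p x]; first by rewrite Hl eqxx in Ua.
rewrite last_rcons rcons_path size_rcons => Hs /andP[Hp Hx] Hl; subst x.
have Hls : last u p = s by apply: (leaf_uniq La); rewrite sym.
by exists (rcons p b); rewrite size_rcons rcons_path last_rcons Hp Hls Hb.
Qed.

Lemma twin_dist (T : finType) (e : rel T) a b s u :
  symmetric e -> leaf e a -> leaf e b -> e s a -> e s b -> u != a -> u != b ->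
  dist e u a = dist e u b.
Proof.
move=> sym La Lb Ha Hb Ua Ub; rewrite /dist; apply: eq_find => k.
by apply/idP/idP; [apply: (twin_walk sym La Ha Hb Ua) | apply: (twin_walk sym Lb Hb Ha Ub)].
Qed.

Lemma NAL (T : finType) (e : rel T) : is_tree e -> ~ iso_P2 e ->
  forall a b, leaf e a -> leaf e b -> ~~ e a b.
Proof.
case=> _ [sym irr] conn _ nP2 a b La Lb; apply/negP => Hab.
have ab : a != b by apply: contraTneq Hab => ->; rewrite irr.
have all2 : forall c, (c == a) || (c == b).
  have key : forall p x, (x == a) || (x == b) -> path e x p ->
      (last x p == a) || (last x p == b).
    elim=> [|y p IH] x //= Hx /andP[Hxy Hp]; apply: IH Hp.
    case/orP: Hx => /eqP Hx; subst x.
      by rewrite (leaf_uniq La Hxy Hab) eqxx orbT.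
    by rewrite (leaf_uniq Lb Hxy (_ : e b a)) ?eqxx // sym.
  move=> c; have /connectP[p Hp ->] := conn a c.
  by apply: key Hp; rewrite eqxx.
apply: nP2.
pose f x : 'I_2 := if x == a then ord0 else ord_max.
pose g (i : 'I_2) := if i == ord0 then a else b.
have fa : f a = ord0 by rewrite /f eqxx.
have fb : f b = ord_max by rewrite /f eq_sym (negbTE ab).
have xab : forall x, x = a \/ x = b by move=> x; case/orP: (all2 x) => /eqP->; auto.
exists f; split.
  exists g.
    by move=> x; case: (xab x) => ->; rewrite ?fa ?fb.
  move=> [[|[|k]] Hk] //; rewrite /g.
    by have -> : Ordinal Hk = ord0 by apply/val_inj.
  have -> : Ordinal Hk = ord_max by apply/val_inj.
  by have -> : (ord_max == ord0 :> 'I_2) = false by [].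
move=> x y; case: (xab x) => ->; case: (xab y) => ->; rewrite ?fa ?fb ?irr //.
by rewrite sym.
Qed.

Lemma gamma_le (T : finType) (e : rel T) (S : {set T}) :
  dominating e S -> gamma e <= #|S|.
Proof.
rewrite /gamma; case: arg_minnP => [|D _ H]; last exact: H.
by apply/forallP => v; rewrite inE.
Qed.

Lemma gamma_ex (T : finType) (e : rel T) :
  exists2 S : {set T}, dominating e S & #|S| = gamma e.
Proof.
rewrite /gamma; case: arg_minnP => [|D H _]; last by exists D.
by apply/forallP => v; rewrite inE.
Qed.

Lemma dist_0 (T : finType) (e : rel T) u v : 0 < #|T| -> (dist e u v == 0) = (u == v).
Proof. by rewrite /dist; case: #|T| => // n _; rewrite [iota _ _]/= /= walk0; case: (u == v). Qed.

Lemma setT_res (T : finType) (e : rel T) : resolving e [set: T].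
Proof.
apply/forallP => x; apply/forallP => y; apply/implyP => xy.
apply/exists_inP; exists x; rewrite ?inE //.
have n0 : 0 < #|T| by apply/card_gt0P; exists x.
have /eqP -> : dist e x x == 0 by rewrite dist_0 ?eqxx.
by rewrite eq_sym dist_0.
Qed.

Lemma gammaM_le (T : finType) (e : rel T) (S : {set T}) :
  resolving e S -> dominating e S -> gammaM e <= #|S|.
Proof.
move=> H1 H2; rewrite /gammaM; case: arg_minnP => [|D _ H]; last by apply: H; rewrite H1.
by rewrite setT_res; apply/forallP => v; rewrite inE.
Qed.

Lemma gammaM_ex (T : finType) (e : rel T) :
  exists2 S : {set T}, resolving e S && dominating e S & #|S| = gammaM e.
Proof.
rewrite /gammaM; case: arg_minnP => [|D H _]; last by exists D.
by rewrite setT_res; apply/forallP => v; rewrite inE.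
Qed.

Lemma count_lemma (T : finType) (A D X : {set T}) (f : T -> T) :
  {in A &, injective f} -> (forall a, a \in A -> f a \in D) ->
  (forall a, a \in A -> f a \in X) ->
  #|A| <= #|D| /\ (#|A| = #|D| -> D \subset X).
Proof.
move=> inj HD HX.
have sub : f @: A \subset D by apply/subsetP => y /imsetP[a Ha ->]; apply: HD.
have card : #|f @: A| = #|A| by apply: card_in_imset.
split; first by rewrite -card subset_leq_card.
move=> eqc; have : f @: A = D by apply/eqP; rewrite eqEcard sub card eqc leqnn.
move=> <-; apply/subsetP => y /imsetP[a Ha ->]; exact: HX.
Qed.

Definition Lset (T : finType) (e : rel T) := [set x | leaf e x].
Definition sup (T : finType) (e : rel T) a := odflt a [pick y | e a y].
Definition lf (T : finType) (e : rel T) s := odflt s [pick y | leaf e y && e s y].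

Lemma sup_spec (T : finType) (e : rel T) a : leaf e a -> e a (sup e a).
Proof.
move=> /leaf_nb[y Hy]; rewrite /sup; case: pickP => [z //|/(_ y)]; by rewrite Hy.
Qed.

Lemma lf_spec (T : finType) (e : rel T) s : s \in support_set e ->
  leaf e (lf e s) && e s (lf e s).
Proof.
rewrite inE => /existsP[y Hy]; rewrite /lf; case: pickP => [z //|/(_ y)]; by rewrite Hy.
Qed.

Lemma LB1 (T : finType) (e : rel T) (D : {set T}) :
  symmetric e -> (forall a b, leaf e a -> leaf e b -> ~~ e a b) ->
  dominating e D -> #|support_set e| <= #|D| /\
  (#|support_set e| = #|D| -> D \subset support_set e :|: Lset e).
Proof.
move=> sym nal dom.
pose f s := if s \in D then s else lf e s.
have lfD : forall s, s \in support_set e -> s \notin D -> lf e s \in D.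
  move=> s Hs sD; case/andP: (lf_spec Hs) => L1 E1.
  apply/negPn/negP => lD; move/forallP/(_ (lf e s)): dom; rewrite lD /=.
  case/exists_inP => u uD Hu.
  have us : u = s by apply: (leaf_uniq L1); rewrite sym.
  by rewrite us (negbTE sD) in uD.
apply: (@count_lemma _ (support_set e) D (support_set e :|: Lset e) f).
- move=> s t Hs Ht; rewrite /f.
  case: ifPn => sD; case: ifPn => tD //; last first.
  + move=> Hst; case/andP: (lf_spec Hs) => L1 E1; case/andP: (lf_spec Ht) => L2 E2.
    apply: (leaf_uniq L1); first by rewrite sym.
    by rewrite Hst sym.
  + move=> Hst; case/andP: (lf_spec Hs) => L1 E1; move: Ht; rewrite inE => /existsP[y /andP[Ly Ey]].
    by move: (nal _ _ L1 Ly); rewrite Hst Ey.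
  + move=> Hst; case/andP: (lf_spec Ht) => L1 E1; move: Hs; rewrite inE => /existsP[y /andP[Ly Ey]].
    by move: (nal _ _ L1 Ly); rewrite -Hst Ey.
- by move=> s Hs; rewrite /f; case: ifPn => // sD; apply: lfD.
- move=> s Hs; rewrite /f in_setU; case: ifP => _; first by rewrite Hs.
  by case/andP: (lf_spec Hs) => L _; rewrite /Lset inE L orbT.
Qed.

Lemma LB2 (T : finType) (e : rel T) (D : {set T}) :
  symmetric e -> (forall a b, leaf e a -> leaf e b -> ~~ e a b) ->
  resolving e D -> dominating e D -> #|Lset e| <= #|D| /\
  (#|Lset e| = #|D| -> D \subset support_set e :|: Lset e).
Proof.
move=> sym nal res dom.
pose f a := if a \in D then a else sup e a.
have supD : forall a, leaf e a -> a \notin D -> sup e a \in D.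
  move=> a La aD; move/forallP/(_ a): dom; rewrite aD /=.
  case/exists_inP => u uD Hu.
  have us : u = sup e a by apply: (leaf_uniq La); [rewrite sym | apply: sup_spec].
  by rewrite -us.
apply: (@count_lemma _ (Lset e) D (support_set e :|: Lset e) f).
- move=> a b; rewrite /Lset !inE => La Lb; rewrite /f.
  case: ifPn => aD; case: ifPn => bD //; last first.
  + move=> Hab; apply/eqP; apply: contraT => nab.
    move/forallP/(_ a)/forallP/(_ b): res; rewrite nab /= => /exists_inP[u uD].
    have ua : u != a by apply: contraNneq aD => <-.
    have ub : u != b by apply: contraNneq bD => <-.
    have Ea : e (sup e a) a by rewrite sym sup_spec.
    have Eb : e (sup e a) b by rewrite Hab sym sup_spec.
    by rewrite (twin_dist sym La Lb Ea Eb ua ub) eqxx.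
  + move=> Hab; move: (nal _ _ Lb La); by rewrite -Hab sym sup_spec.
  + move=> Hab; move: (nal _ _ La Lb); by rewrite Hab sym sup_spec.
- by move=> a; rewrite /Lset inE /f => La; case: ifPn => // aD; apply: supD.
- move=> a; rewrite /Lset inE /f in_setU => La; case: ifP => _; first by rewrite inE La orbT.
  apply/orP; left; rewrite inE; apply/existsP; exists a; by rewrite La sym sup_spec.
Qed.

Lemma cyc3 (T : finType) (e : rel T) a b c : acyclic e ->
  a != b -> a != c -> b != c -> e a b -> e b c -> e c a -> False.
Proof.
move=> ac ab ac' bc e1 e2 e3; apply: ac; exists [:: a; b; c].
by rewrite /= !inE !negb_or ab ac' bc e1 e2 e3.
Qed.

Lemma cyc4 (T : finType) (e : rel T) a b c d : acyclic e ->
  a != b -> a != c -> a != d -> b != c -> b != d -> c != d ->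
  e a b -> e b c -> e c d -> e d a -> False.
Proof.
move=> ac ab ac' ad bc bd cd e1 e2 e3 e4; apply: ac; exists [:: a; b; c; d].
by rewrite /= !inE !negb_or ab ac' ad bc bd cd e1 e2 e3 e4.
Qed.

Lemma cyc6 (T : finType) (e : rel T) a b c d f g : acyclic e ->
  a != b -> a != c -> a != d -> a != f -> a != g ->
  b != c -> b != d -> b != f -> b != g ->
  c != d -> c != f -> c != g -> d != f -> d != g -> f != g ->
  e a b -> e b c -> e c d -> e d f -> e f g -> e g a -> False.
Proof.
move=> ac ab ac' ad af ag bc bd bf bg cd cf cg df dg fg e1 e2 e3 e4 e5 e6.
apply: ac; exists [:: a; b; c; d; f; g].
by rewrite /= !inE !negb_or ab ac' ad af ag bc bd bf bg cd cf cg df dg fg e1 e2 e3 e4 e5 e6.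
Qed.

Lemma dist_le2 (T : finType) (e : rel T) u v : 2 < #|T| ->
  (u == v) || e u v || [exists t, e u t && e t v] -> dist e u v <= 2.
Proof.
move=> H3; rewrite (dist_spec _ _ _ H3).
by case: (u == v) => //=; case: (e u v) => //= ->.
Qed.

Lemma final_lemma (T : finType) (e : rel T) (D : {set T}) : 2 < #|T| ->
  symmetric e -> dominating e D -> D \subset support_set e :|: Lset e ->
  forall u, exists2 w, leaf e w & dist e u w <= 2.
Proof.
move=> H3 sym dom sub u.
have HS : forall v, v \in support_set e -> exists y, leaf e y && e v y.
  by move=> v; rewrite inE => /existsP.
case: (boolP (u \in D)) => uD.
  move/subsetP/(_ u uD): sub; rewrite in_setU => /orP[/HS[y /andP[Ly Ey]]|].
    by exists y => //; apply: (dist_le2 H3); rewrite Ey orbT.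
  rewrite /Lset inE => Lu; exists u => //; apply: (dist_le2 H3); by rewrite eqxx.
move/forallP/(_ u): dom; rewrite uD /= => /exists_inP[v vD Evu].
move/subsetP/(_ v vD): sub; rewrite in_setU => /orP[/HS[y /andP[Ly Ey]]|].
  exists y => //; apply: (dist_le2 H3); apply/orP; right; apply/existsP; exists v.
  by rewrite sym Evu Ey.
rewrite /Lset inE => Lv; exists v => //; apply: (dist_le2 H3); by rewrite sym Evu orbT.
Qed.

Lemma iii_dom (T : finType) (e : rel T) : 2 < #|T| -> symmetric e ->
  (forall u, exists2 w, leaf e w & dist e u w <= 2) -> dominating e (support_set e).
Proof.
move=> H3 sym H; apply/forallP => v; apply/implyP => vS.
have [w Lw Hd] := H v; move: Hd; rewrite (dist_spec _ _ _ H3).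
case: eqP => [Evw _|_].
  subst w.
  have [s Es] := leaf_nb Lw; apply/exists_inP; exists s => //.
    by rewrite inE; apply/existsP; exists v; rewrite Lw sym.
  by rewrite sym.
case: ifP => [Evw _|_].
  by move: vS; rewrite inE; case/existsP; exists w; rewrite Lw.
case: ifP => [/existsP[t /andP[Evt Etw]] _|//].
apply/exists_inP; exists t; last by rewrite sym.
by rewrite inE; apply/existsP; exists w; rewrite Lw.
Qed.

Definition Dc (T : finType) (e : rel T) :=
  support_set e :|: (Lset e :\: (lf e @: support_set e)).

Lemma lf_inj (T : finType) (e : rel T) : symmetric e ->
  {in support_set e &, injective (lf e)}.
Proof.
move=> sym s t Hs Ht Hst.
case/andP: (lf_spec Hs) => L1 E1; case/andP: (lf_spec Ht) => L2 E2.
apply: (leaf_uniq L1); first by rewrite sym.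
by rewrite Hst sym.
Qed.

Lemma Dc_card (T : finType) (e : rel T) : symmetric e ->
  (forall a b, leaf e a -> leaf e b -> ~~ e a b) -> #|Dc e| = #|Lset e|.
Proof.
move=> sym nal.
have RL : lf e @: support_set e \subset Lset e.
  by apply/subsetP => y /imsetP[s Hs ->]; case/andP: (lf_spec Hs); rewrite /Lset inE.
have cR : #|lf e @: support_set e| = #|support_set e| by apply: card_in_imset; apply: lf_inj.
have disj : support_set e :&: (Lset e :\: lf e @: support_set e) = set0.
  apply/setP => x; rewrite inE [x \in set0]inE in_setD /Lset [x \in [set _ | _]]inE.
  case: (boolP (leaf e x)) => Lx; rewrite ?andbF ?andbT //.
  apply/negP => /andP[]; rewrite inE => /existsP[y /andP[Ly Exy]].
  by move: (nal _ _ Lx Ly); rewrite Exy.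
rewrite /Dc cardsU disj cards0 subn0 cardsD (setIidPr RL) cR.
rewrite subnKC // -cR; exact: subset_leq_card.
Qed.

Lemma dist1_eq (T : finType) (e : rel T) a b c : 2 < #|T| ->
  dist e a b = dist e a c -> e a b -> a != b -> e a c.
Proof.
move=> H3; rewrite !(dist_spec _ _ _ H3) => H Eab ab.
move: H; rewrite (negbTE ab) Eab.
by case: (a == c); case: (e a c) => //; case: ifP.
Qed.

Lemma dist2_eq (T : finType) (e : rel T) a b c z : 2 < #|T| ->
  dist e a b = dist e a c -> a != b -> ~~ e a b -> e a z -> e z b ->
  [/\ a != c, ~~ e a c & exists t, e a t && e t c].
Proof.
move=> H3; rewrite !(dist_spec _ _ _ H3) => H ab Eab E1 E2.
have Ex : [exists t, e a t && e t b] by apply/existsP; exists z; rewrite E1.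
move: H; rewrite (negbTE ab) (negbTE Eab) Ex.
case: (a == c) => //; case: (e a c) => //; case: ifP => // /existsP H _.
by split.
Qed.

Lemma step (T : finType) (e : rel T) x y u : 2 < #|T| ->
  symmetric e -> irreflexive e -> acyclic e ->
  (forall u, exists2 w, leaf e w & dist e u w <= 2) ->
  x \notin Dc e -> y \notin Dc e -> x != y ->
  (forall v, v \in Dc e -> dist e v x = dist e v y) ->
  u \in Dc e -> e u x -> e u y -> ~~ e x y -> ~~ leaf e x -> False.
Proof.
move=> H3 sym irr ac iii xD yD xy H uD Eux Euy Exy Lx.
have SD : forall s, s \in support_set e -> s \in Dc e.
  by move=> s Hs; rewrite /Dc in_setU Hs.
have neq : forall a b, a \in Dc e -> b \notin Dc e -> a != b.
  by move=> a b aD bD; apply: contraNneq bD => <-.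
have ne : forall a b, e a b -> a != b.
  by move=> a b Eab; apply: contraTneq Eab => ->; rewrite irr.
have Exu : e x u by rewrite sym.
have [z Exz zu] := nonleaf_nb Lx Exu.
have zS : ~~ leaf e z.
  apply/negP => Lz; move: xD; rewrite SD //.
  by rewrite inE; apply/existsP; exists z; rewrite Lz.
have xu : x != u by rewrite eq_sym neq.
have yu : y != u by rewrite eq_sym neq.
have zy : z != y by apply: contraNneq Exy => <-.
have c4 : ~~ e z y.
  apply/negP => Ezy.
  apply: (cyc4 ac (ne _ _ Exz) xy xu zy zu yu Exz Ezy); by rewrite sym.
have [w Lw] := iii z; rewrite (dist_spec _ _ _ H3).
case: eqP => [zw|_]; first by rewrite zw Lw in zS.
case: ifP => [Ezw _|_].
  have zD : z \in Dc e by apply: SD; rewrite inE; apply/existsP; exists w; rewrite Lw.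
  have Ezy : e z y.
    apply: (dist1_eq H3 (H z zD)); by [rewrite sym | rewrite eq_sym ne].
  by rewrite Ezy in c4.
case: ifP => [/existsP[s /andP[Ezs Esw]] _|//].
have sD : s \in Dc e by apply: SD; rewrite inE; apply/existsP; exists w; rewrite Lw.
have sx : s != x by apply: neq.
have zs : z != s by apply: ne.
have su : s != u.
  apply/negP => /eqP su; subst s.
  apply: (cyc3 ac (ne _ _ Exz) xu zu Exz Ezs Eux).
have Esx : ~~ e s x.
  apply/negP => Esx; apply: (cyc3 ac (ne _ _ Exz) (_ : x != s) zs Exz Ezs Esx).
  by rewrite eq_sym.
have Esz : e s z by rewrite sym.
have Ezx : e z x by rewrite sym.
have [sy Esy [t /andP[Est Ety]]] := dist2_eq H3 (H s sD) sx Esx Esz Ezx.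
have tu : t != u.
  apply/negP => /eqP tu; subst t.
  apply: (cyc4 ac (ne _ _ Exz) _ xu zs zu su Exz Ezs Est Eux); by rewrite eq_sym.
have tz : t != z.
  apply/negP => /eqP tz; subst t; by rewrite Ety in c4.
have tx : t != x.
  apply/negP => /eqP tx; subst t; by rewrite Ety in Exy.
apply: (cyc6 ac (ne _ _ Exz) _ _ xy xu zs _ zy zu (ne _ _ Est) sy su (ne _ _ Ety) tu yu
          Exz Ezs Est Ety _ Eux).
- by rewrite eq_sym.
- by rewrite eq_sym.
- by rewrite eq_sym.
- by rewrite sym.
Qed.

Lemma Dc_res (T : finType) (e : rel T) : 2 < #|T| ->
  symmetric e -> irreflexive e -> acyclic e ->
  (forall u, exists2 w, leaf e w & dist e u w <= 2) -> resolving e (Dc e).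
Proof.
move=> H3 sym irr ac iii.
have n0 : 0 < #|T| by apply: leq_trans H3.
apply/forallP => x; apply/forallP => y; apply/implyP => xy.
apply: contraT => /exists_inPn H'; exfalso.
have H : forall v, v \in Dc e -> dist e v x = dist e v y.
  by move=> v vD; apply/eqP; move: (H' v vD); rewrite negbK.
have xD : x \notin Dc e.
  apply/negP => xD; move: (H x xD) => /esym/eqP.
  have /eqP -> : dist e x x == 0 by rewrite dist_0 ?eqxx.
  by rewrite dist_0 // (negbTE xy).
have yD : y \notin Dc e.
  apply/negP => yD; move: (H y yD) => /eqP.
  have /eqP -> : dist e y y == 0 by rewrite dist_0 ?eqxx.
  by rewrite dist_0 // eq_sym (negbTE xy).
have xS : x \notin support_set e by apply: contra xD; rewrite /Dc in_setU => ->.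
have [u uS Eux] : exists2 u, u \in support_set e & e u x.
  by move/forallP/(_ x): (iii_dom H3 sym iii); rewrite xS /= => /exists_inP.
have uD : u \in Dc e by rewrite /Dc in_setU uS.
have ne : forall a b, e a b -> a != b.
  by move=> a b Eab; apply: contraTneq Eab => ->; rewrite irr.
have Euy : e u y by apply: (dist1_eq H3 (H u uD) Eux (ne _ _ Eux)).
have xu : x != u by apply: contraNneq xD => ->.
have yu : y != u by apply: contraNneq yD => ->.
have Exy : ~~ e x y.
  apply/negP => Exy; apply: (cyc3 ac xy xu yu Exy _ Eux); by rewrite sym.
case: (boolP (leaf e x)) => Lx; last first.
  exact: (step H3 sym irr ac iii xD yD xy H uD Eux Euy Exy Lx).
case: (boolP (leaf e y)) => Ly; last first.
  apply: (step H3 sym irr ac iii yD xD _ _ uD Euy Eux _ Ly).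
  - by rewrite eq_sym.
  - by move=> v vD; rewrite H.
  - by rewrite sym.
have inR : forall a, a \notin Dc e -> leaf e a -> e u a -> a = lf e u.
  move=> a aD La Eua; move: aD; rewrite /Dc in_setU in_setD /Lset inE La negb_or.
  case/andP=> _; rewrite andbT negbK => /imsetP[s Hs Has]; subst a.
  case/andP: (lf_spec Hs) => L1 E1.
  suff -> : s = u by [].
  by apply: (leaf_uniq L1); rewrite sym.
by move: xy; rewrite (inR x xD Lx Eux) (inR y yD Ly Euy) eqxx.
Qed.

Lemma dom_mono (T : finType) (e : rel T) (A B : {set T}) :
  dominating e A -> A \subset B -> dominating e B.
Proof.
move=> dA sub; apply/forallP => v; apply/implyP => vB.
have vA : v \notin A by apply: contra vB; apply/subsetP.
move/forallP/(_ v): dA; rewrite vA /= => /exists_inP[u uA Euv].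
by apply/exists_inP; exists u => //; apply: (subsetP sub).
Qed.

Theorem theorem4 (T : finType) (e : rel T) :
  is_tree e -> ~ iso_P2 e ->
  [/\ (gammaM e = nleaves e <-> gamma e = #|support_set e|),
      (gamma e = #|support_set e| <->
         forall u : T, exists2 w : T, leaf e w & dist e u w <= 2)
    & (gammaM e = nleaves e <->
         forall u : T, exists2 w : T, leaf e w & dist e u w <= 2)].
Proof.
move=> tree nP2; have nal := NAL tree nP2.
case: tree => n0 [sym irr] _ ac.
have [x0 _] : exists x0 : T, x0 \in T by apply/card_gt0P.
case: (boolP [exists a, leaf e a]) => [/existsP[a La]|noL].
  have Es := sup_spec La.
  have Ls : ~~ leaf e (sup e a) by apply/negP => Ls; move: (nal _ _ La Ls); rewrite Es.
  have Esa : e (sup e a) a by rewrite sym.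
  have [c Esc ca] := nonleaf_nb Ls Esa.
  have H3 : 2 < #|T|.
    have U : uniq [:: a; sup e a; c].
      have H1 : a != sup e a by apply: contraTneq Es => <-; rewrite irr.
      have H2 : sup e a != c by apply: contraTneq Esc => <-; rewrite irr.
      by rewrite /= !inE !negb_or H1 H2 eq_sym ca.
    rewrite cardE; apply: (uniq_leq_size U) => y _; by rewrite mem_enum.
  have P1 : gamma e = #|support_set e| <->
         forall u : T, exists2 w : T, leaf e w & dist e u w <= 2.
    split.
      have [D dD cD] := gamma_ex e; rewrite -cD => eqc.
      have [_ /(_ (esym eqc)) sub] := LB1 sym nal dD.
      exact: final_lemma H3 sym dD sub.
    move=> iii; apply/eqP; rewrite eqn_leq gamma_le ?iii_dom //=.
    have [D dD cD] := gamma_ex e; rewrite -cD.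
    by case: (LB1 sym nal dD).
  have P2 : gammaM e = nleaves e <->
         forall u : T, exists2 w : T, leaf e w & dist e u w <= 2.
    split.
      have [D /andP[rD dD] cD] := gammaM_ex e; rewrite -cD => eqc.
      have [_ /(_ (esym eqc)) sub] := LB2 sym nal rD dD.
      exact: final_lemma H3 sym dD sub.
    move=> iii; apply/eqP; rewrite eqn_leq.
    have dDc : dominating e (Dc e).
      by apply: (dom_mono (iii_dom H3 sym iii)); apply: subsetUl.
    have -> : nleaves e = #|Lset e| by [].
    rewrite -{1}(Dc_card sym nal) gammaM_le ?Dc_res //=.
    have [D /andP[rD dD] cD] := gammaM_ex e; rewrite -cD.
    by case: (LB2 sym nal rD dD).
  split => //; split; [move/P2/P1 | move/P1/P2] => //.
have noL' : forall a, ~~ leaf e a by move=> a; apply: contra noL => La; apply/existsP; exists a.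
have Le : nleaves e = 0.
  by apply/eqP; rewrite cards_eq0; apply/eqP/setP => a; rewrite !inE (negbTE (noL' a)).
have Se : #|support_set e| = 0.
  apply/eqP; rewrite cards_eq0; apply/eqP/setP => a; rewrite !inE.
  by apply/existsP => -[y /andP[Ly _]]; move: (noL' y); rewrite Ly.
have domne : forall D : {set T}, dominating e D -> 0 < #|D|.
  move=> D dD; apply/card_gt0P; case: (boolP (x0 \in D)) => [xD|xD]; first by exists x0.
  by move/forallP/(_ x0): dD; rewrite xD /= => /exists_inP[u uD _]; exists u.
have N1 : gamma e <> #|support_set e|.
  have [D dD <-] := gamma_ex e; rewrite Se => H; move: (domne D dD); by rewrite H.
have N2 : gammaM e <> nleaves e.
  have [D /andP[_ dD] <-] := gammaM_ex e; rewrite Le => H; move: (domne D dD); by rewrite H.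
have N3 : ~ (forall u : T, exists2 w : T, leaf e w & dist e u w <= 2).
  by move=> H; have [w Lw _] := H x0; move: (noL' w); rewrite Lw.
by split; split => H; exfalso; auto.
Qed.
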